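(* Let $X,Y$ be real Hilbert spaces and $a:X\times Y\to\mathbb{R}\cup\{+\infty\}$ such that for every $y\in Y$ the function $a(\cdot,y)$ is proper and $\Phi_{lsc}$-convex on $X$, and for every $x\in X$ the function $a(x,\cdot)$ is concave on $Y$. Assume $\beta:=\inf_{x\in X}\sup_{y\in Y}a(x,y)<+\infty$. If there exist $y_1,y_2\in Y$ and $\bar x\in\mathrm{dom}\,a(\cdot,y_1)\cap\mathrm{dom}\,a(\cdot,y_2)$ with $a(\bar x,y_1)\ge\beta$ and $a(\bar x,y_2)\ge\beta$ such that $a(\cdot,y_1)$ and $a(\cdot,y_2)$ satisfy $ZS(0,\bar x)$, then $\sup_{y\in Y}\inf_{x\in X}a(x,y)=\inf_{x\in X}\sup_{y\in Y}a(x,y)$.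
   Context: $\Phi_{lsc}$ is the class of functions $\varphi(x)=-a\|x\|^2+\langle v,x\rangle+c$ ($a\ge0$, $v\in X^*$, $c\in\mathbb{R}$); $\mathrm{supp}(f)=\{\varphi\in\Phi_{lsc}:\varphi\le f\}$; $f$ is $\Phi_{lsc}$-convex if $f=\sup\mathrm{supp}(f)$ pointwise; proper means $\mathrm{supp}(f)\ne\emptyset$ and $\mathrm{dom}(f)\ne\emptyset$. $\partial_{lsc}f(\bar x)$ is the set of $(a,v)\in\mathbb{R}_+\times X^*$ with $f(x)-f(\bar x)\ge\langle v,x-\bar x\rangle-a\|x\|^2+a\|\bar x\|^2$ for all $x\in X$. Functions $f,g$ satisfy $ZS(0,\bar x)$ if $0=(0,0)\in\mathrm{co}(\partial_{lsc}f(\bar x)\cup\partial_{lsc}g(\bar x))$, convex hull in $\mathbb{R}\times X^*$. *)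

(* Defs.v *)
From Stdlib Require Import Reals List.
Open Scope R_scope.

Record Hilbert := {
  hcar :> Type;
  hzero : hcar;
  hadd : hcar -> hcar -> hcar;
  hopp : hcar -> hcar;
  hscal : R -> hcar -> hcar;
  hinner : hcar -> hcar -> R;
  hadd_assoc : forall x y z, hadd x (hadd y z) = hadd (hadd x y) z;
  hadd_comm : forall x y, hadd x y = hadd y x;
  hadd_zero : forall x, hadd x hzero = x;
  hadd_opp : forall x, hadd x (hopp x) = hzero;
  hscal_one : forall x, hscal 1 x = x;
  hscal_assoc : forall a b x, hscal a (hscal b x) = hscal (a * b) x;
  hscal_distr_l : forall a x y, hscal a (hadd x y) = hadd (hscal a x) (hscal a y);
  hscal_distr_r : forall a b x, hscal (a + b) x = hadd (hscal a x) (hscal b x);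
  hinner_sym : forall x y, hinner x y = hinner y x;
  hinner_add : forall x y z, hinner (hadd x y) z = hinner x z + hinner y z;
  hinner_scal : forall a x y, hinner (hscal a x) y = a * hinner x y;
  hinner_pos : forall x, 0 <= hinner x x;
  hinner_def : forall x, hinner x x = 0 -> x = hzero;
  hcomplete : forall u : nat -> hcar,
    (forall eps, 0 < eps -> exists N, forall m n, (N <= m)%nat -> (N <= n)%nat ->
        hinner (hadd (u m) (hopp (u n))) (hadd (u m) (hopp (u n))) < eps) ->
    exists l, forall eps, 0 < eps -> exists N, forall n, (N <= n)%nat ->
        hinner (hadd (u n) (hopp l)) (hadd (u n) (hopp l)) < eps
}.

Arguments hzero {h}.
Arguments hadd {h}.
Arguments hopp {h}.
Arguments hscal {h}.
Arguments hinner {h}.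

Definition hsub {X : Hilbert} (x y : X) : X := hadd x (hopp y).
Definition hnorm2 {X : Hilbert} (x : X) : R := hinner x x.

Inductive ER := Fin (r : R) | pinf | ninf.

Definition ER_le (x y : ER) : Prop :=
  match x, y with
  | ninf, _ => True
  | _, pinf => True
  | Fin a, Fin b => a <= b
  | _, _ => False
  end.

Definition is_sup_on {I : Type} (P : I -> Prop) (g : I -> ER) (s : ER) : Prop :=
  (forall i, P i -> ER_le (g i) s) /\
  (forall b, (forall i, P i -> ER_le (g i) b) -> ER_le s b).

Definition is_inf_on {I : Type} (P : I -> Prop) (g : I -> ER) (s : ER) : Prop :=
  (forall i, P i -> ER_le s (g i)) /\
  (forall b, (forall i, P i -> ER_le b (g i)) -> ER_le b s).

Definition is_sup {I : Type} (g : I -> ER) (s : ER) := is_sup_on (fun _ => True) g s.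
Definition is_inf {I : Type} (g : I -> ER) (s : ER) := is_inf_on (fun _ => True) g s.

(** The elementary function x |-> -a ||x||^2 + <v,x> + c
    (X^* is identified with X via the Riesz representation). *)
Record PhiLsc (X : Hilbert) := mkPhi { phi_a : R; phi_v : X; phi_c : R }.
Arguments phi_a {X}. Arguments phi_v {X}. Arguments phi_c {X}.

Definition phi_eval {X : Hilbert} (p : PhiLsc X) (x : X) : R :=
  - phi_a p * hnorm2 x + hinner (phi_v p) x + phi_c p.

Definition in_supp {X : Hilbert} (f : X -> ER) (p : PhiLsc X) : Prop :=
  0 <= phi_a p /\ forall x, ER_le (Fin (phi_eval p x)) (f x).

Definition dom {X : Hilbert} (f : X -> ER) (x : X) : Prop := exists r, f x = Fin r.

Definition Phi_convex {X : Hilbert} (f : X -> ER) : Prop :=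
  forall x, is_sup_on (in_supp f) (fun p => Fin (phi_eval p x)) (f x).

Definition proper {X : Hilbert} (f : X -> ER) : Prop :=
  (exists p, in_supp f p) /\ (exists x, dom f x).

Definition lsc_subdiff {X : Hilbert} (f : X -> ER) (xbar : X) (a : R) (v : X) : Prop :=
  0 <= a /\ exists fx, f xbar = Fin fx /\
  forall x, ER_le (Fin (fx + hinner v (hsub x xbar) - a * hnorm2 x + a * hnorm2 xbar)) (f x).

(** (0,0) belongs to the convex hull (finite convex combinations) of
    lsc_subdiff f xbar U lsc_subdiff g xbar in R x X^* *)
Definition ZS0 {X : Hilbert} (f g : X -> ER) (xbar : X) : Prop :=
  exists l : list (R * (R * X)),
    Forall (fun t => 0 <= fst t /\
       (lsc_subdiff f xbar (fst (snd t)) (snd (snd t)) \/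
        lsc_subdiff g xbar (fst (snd t)) (snd (snd t)))) l /\
    fold_right (fun t s => fst t + s) 0 l = 1 /\
    fold_right (fun t s => fst t * fst (snd t) + s) 0 l = 0 /\
    fold_right (fun t s => hadd (hscal (fst t) (snd (snd t))) s) hzero l = hzero.

(** concavity of h : Y -> R U {+oo}: its hypograph is convex *)
Definition concave {Y : Hilbert} (h : Y -> ER) : Prop :=
  forall y1 y2 r1 r2 t, 0 <= t <= 1 ->
    ER_le (Fin r1) (h y1) -> ER_le (Fin r2) (h y2) ->
    ER_le (Fin (t * r1 + (1 - t) * r2)) (h (hadd (hscal t y1) (hscal (1 - t) y2))).

(* Main.v *)
Require Import Defs.
From Stdlib Require Import Reals List Lra ClassicalDescription.
Open Scope R_scope.

Lemma ER_le_trans x y z : ER_le x y -> ER_le y z -> ER_le x z.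
Proof. destruct x, y, z; simpl; intros; auto; try lra; contradiction. Qed.

Definition sumw {T : Type} (g : T -> R) (l : list T) : R :=
  fold_right (fun t s => g t + s) 0 l.

Lemma sumw_nonneg {T} (g : T -> R) l :
  Forall (fun t => 0 <= g t) l -> 0 <= sumw g l.
Proof. induction 1; simpl; lra. Qed.

Lemma sumw_zero {T} (g : T -> R) l :
  Forall (fun t => 0 <= g t) l -> sumw g l = 0 -> Forall (fun t => g t = 0) l.
Proof.
  induction 1 as [|t l Ht Hl IH]; simpl; intros Hs; constructor.
  - pose proof (sumw_nonneg g l Hl). unfold sumw in *. lra.
  - apply IH. pose proof (sumw_nonneg g l Hl). unfold sumw in *. lra.
Qed.

Lemma sumw_add {T} (g h : T -> R) l :
  sumw (fun t => g t + h t) l = sumw g l + sumw h l.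
Proof. induction l; simpl; [lra|]. unfold sumw in *. rewrite IHl. lra. Qed.

Lemma sumw_ext {T} (g h : T -> R) l :
  (forall t, g t = h t) -> sumw g l = sumw h l.
Proof. intros H; induction l; simpl; auto. unfold sumw in *. rewrite IHl, H. auto. Qed.

Lemma hinner_zero (X : Hilbert) (d : X) : hinner hzero d = 0.
Proof.
  pose proof (hinner_add X hzero hzero d) as H. rewrite hadd_zero in H. lra.
Qed.

Lemma inner_fold (X : Hilbert) (l : list (R * (R * X))) (d : X) :
  hinner (fold_right (fun t s => hadd (hscal (fst t) (snd (snd t))) s) hzero l) d
  = sumw (fun t => fst t * hinner (snd (snd t)) d) l.
Proof.
  induction l; simpl. apply hinner_zero.
  rewrite hinner_add, hinner_scal, IHl. reflexivity.
Qed.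

Lemma stepD (X : Hilbert) (f : X -> ER) (xbar x : X) (F z : R)
  (Q : R * (R * X) -> bool) (l : list (R * (R * X))) :
  Forall (fun t => 0 <= fst t /\ fst t * fst (snd t) = 0 /\
     (Q t = true -> lsc_subdiff f xbar (fst (snd t)) (snd (snd t)))) l ->
  f xbar = Fin F -> f x = Fin z ->
  sumw (fun t => if Q t then fst t else 0) l * F
  + sumw (fun t => if Q t then fst t * hinner (snd (snd t)) (hsub x xbar) else 0) l
  <= sumw (fun t => if Q t then fst t else 0) l * z.
Proof.
  intros HF Hb Hx. induction HF as [|t l [H0 [Ha HQ]] Hl IH]; simpl; [lra|].
  unfold sumw in *.
  destruct (Q t) eqn:E.
  - destruct (HQ eq_refl) as [Hapos [fx [Hfx Hle]]].
    specialize (Hle x). rewrite Hx in Hle. simpl in Hle.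
    rewrite Hb in Hfx. injection Hfx as <-.
    destruct t as [lam [aa v]]. simpl in *.
    set (e := F + hinner v (hsub x xbar) - aa * hnorm2 x + aa * hnorm2 xbar) in *.
    assert (lam * e <= lam * z) by (apply Rmult_le_compat_l; auto).
    replace (lam * e) with (lam * F + lam * hinner v (hsub x xbar)
       - (lam * aa) * hnorm2 x + (lam * aa) * hnorm2 xbar) in H by (unfold e; ring).
    rewrite Ha in H. nra.
  - lra.
Qed.

Lemma choose_r (X : Hilbert) (f : X -> ER) (xbar x : X) (F : R)
  (Q : R * (R * X) -> bool) (l : list (R * (R * X))) :
  Forall (fun t => 0 <= fst t /\ fst t * fst (snd t) = 0 /\
     (Q t = true -> lsc_subdiff f xbar (fst (snd t)) (snd (snd t)))) l ->
  f xbar = Fin F -> f x <> ninf ->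
  exists r, ER_le (Fin r) (f x) /\
   sumw (fun t => if Q t then fst t else 0) l * r =
   sumw (fun t => if Q t then fst t else 0) l * F
   + sumw (fun t => if Q t then fst t * hinner (snd (snd t)) (hsub x xbar) else 0) l.
Proof.
  intros HF Hb Hn.
  set (mu := sumw (fun t => if Q t then fst t else 0) l).
  set (S := sumw (fun t => if Q t then fst t * hinner (snd (snd t)) (hsub x xbar) else 0) l).
  assert (Hmu : 0 <= mu).
  { apply sumw_nonneg. eapply Forall_impl; [|exact HF]. simpl. intros t [H _].
    destruct (Q t); lra. }
  destruct (Rle_lt_or_eq_dec 0 mu Hmu) as [Hp|H0].
  - exists ((mu * F + S) / mu). split.
    + destruct (f x) eqn:E; simpl; auto.
      pose proof (stepD X f xbar x F r Q l HF Hb E) as HD. fold mu S in HD.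
      apply (Rmult_le_reg_l mu); auto. field_simplify; lra.
    + field. lra.
  - assert (HS : S = 0).
    { assert (Hz : Forall (fun t => (if Q t then fst t else 0) = 0) l).
      { apply sumw_zero; auto. eapply Forall_impl; [|exact HF]. simpl. intros t [H _].
        destruct (Q t); lra. }
      unfold S. clear -Hz. induction Hz; simpl; auto. unfold sumw in *.
      rewrite IHHz. destruct (Q x0); [rewrite H|]; ring. }
    destruct (f x) eqn:E; [|exists 0|contradiction]; simpl.
    + exists r. rewrite <- H0, HS. simpl. split; [lra|ring].
    + rewrite <- H0, HS. split; auto; ring.
Qed.

Theorem mainTheorem14 (X Y : Hilbert) (a : X -> Y -> ER)
  (Ha_val : forall x y, a x y <> ninf)
  (Ha_proper : forall y, proper (fun x => a x y))
  (Ha_conv : forall y, Phi_convex (fun x => a x y))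
  (Ha_conc : forall x, concave (fun y => a x y))
  (supa : X -> ER) (Hsupa : forall x, is_sup (fun y => a x y) (supa x))
  (infa : Y -> ER) (Hinfa : forall y, is_inf (fun x => a x y) (infa y))
  (beta : ER) (Hbeta : is_inf supa beta) (Hbeta_fin : beta <> pinf)
  (y1 y2 : Y) (xbar : X)
  (Hdom1 : dom (fun x => a x y1) xbar) (Hdom2 : dom (fun x => a x y2) xbar)
  (Hge1 : ER_le beta (a xbar y1)) (Hge2 : ER_le beta (a xbar y2))
  (HZS : ZS0 (fun x => a x y1) (fun x => a x y2) xbar) :
  is_sup infa beta.
Proof.
  split.
  - intros y _. apply (proj2 Hbeta). intros x _.
    apply ER_le_trans with (a x y).
    + apply (proj1 (Hinfa y)); auto.
    + apply (proj1 (Hsupa x)); auto.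
  - destruct HZS as [l [HF [H1 [Ha Hv]]]].
    set (Q := fun t : R * (R * X) =>
      if @excluded_middle_informative
         (lsc_subdiff (fun x => a x y1) xbar (fst (snd t)) (snd (snd t)))
      then true else false).
    assert (Hla : Forall (fun t => fst t * fst (snd t) = 0) l).
    { apply (sumw_zero (fun t : R * (R * X) => fst t * fst (snd t))); [|exact Ha].
      eapply Forall_impl; [|exact HF]. simpl.
      intros t [H0 [[Hp _]|[Hp _]]]; apply Rmult_le_pos; auto. }
    assert (HF1 : Forall (fun t => 0 <= fst t /\ fst t * fst (snd t) = 0 /\
     (Q t = true -> lsc_subdiff (fun x => a x y1) xbar (fst (snd t)) (snd (snd t)))) l).
    { apply Forall_forall. intros t Ht.
      pose proof (proj1 (Forall_forall _ l) HF t Ht) as [H0 _].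
      pose proof (proj1 (Forall_forall _ l) Hla t Ht).
      split; [auto|split; [auto|intros HQ]]. unfold Q in HQ.
      destruct (excluded_middle_informative (lsc_subdiff _ _ _ _)); auto.
      discriminate. }
    assert (HF2 : Forall (fun t => 0 <= fst t /\ fst t * fst (snd t) = 0 /\
     (negb (Q t) = true -> lsc_subdiff (fun x => a x y2) xbar (fst (snd t)) (snd (snd t)))) l).
    { apply Forall_forall. intros t Ht.
      pose proof (proj1 (Forall_forall _ l) HF t Ht) as [H0 Hd].
      pose proof (proj1 (Forall_forall _ l) Hla t Ht).
      split; [auto|split; [auto|intros HQ]]. unfold Q in HQ.
      destruct (excluded_middle_informative (lsc_subdiff _ _ _ _)); simpl in HQ.
      discriminate. destruct Hd; tauto. }
    set (mu := sumw (fun t => if Q t then fst t else 0) l).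
    set (nu := sumw (fun t => if negb (Q t) then fst t else 0) l).
    assert (Hmn : mu + nu = 1).
    { unfold mu, nu. rewrite <- sumw_add. rewrite <- H1.
      change (fold_right (fun t s => fst t + s) 0 l) with (sumw (fun t => fst t) l).
      apply sumw_ext. intros t. destruct (Q t); simpl; ring. }
    assert (Hmu : 0 <= mu).
    { apply sumw_nonneg. eapply Forall_impl; [|exact HF1]. simpl. intros t [H _].
      destruct (Q t); lra. }
    assert (Hnu : 0 <= nu).
    { apply sumw_nonneg. eapply Forall_impl; [|exact HF2]. simpl. intros t [H _].
      destruct (Q t); simpl; lra. }
    set (yt := hadd (hscal mu y1) (hscal (1 - mu) y2)).
    intros b Hb. apply ER_le_trans with (infa yt); [|apply Hb; auto].
    apply (proj2 (Hinfa yt)). intros x _.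
    destruct beta as [B| |]; [|contradiction|simpl; auto].
    destruct Hdom1 as [F1 HF1b]. destruct Hdom2 as [F2 HF2b].
    simpl in HF1b, HF2b.
    rewrite HF1b in Hge1. rewrite HF2b in Hge2. simpl in Hge1, Hge2.
    destruct (choose_r X (fun x => a x y1) xbar x F1 Q l HF1 HF1b (Ha_val x y1))
      as [r1 [Hr1 Er1]].
    destruct (choose_r X (fun x => a x y2) xbar x F2 (fun t => negb (Q t)) l HF2 HF2b (Ha_val x y2))
      as [r2 [Hr2 Er2]].
    fold mu in Er1. fold nu in Er2.
    assert (HS : sumw (fun t => if Q t then fst t * hinner (snd (snd t)) (hsub x xbar) else 0) l
      + sumw (fun t => if negb (Q t) then fst t * hinner (snd (snd t)) (hsub x xbar) else 0) l = 0).
    { rewrite <- sumw_add.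
      rewrite (sumw_ext _ (fun t => fst t * hinner (snd (snd t)) (hsub x xbar))).
      - rewrite <- inner_fold, Hv. apply hinner_zero.
      - intros t. destruct (Q t); simpl; ring. }
    pose proof (Ha_conc x y1 y2 r1 r2 mu ltac:(lra) Hr1 Hr2) as Hc.
    fold yt in Hc. simpl in Hc.
    apply ER_le_trans with (Fin (mu * r1 + (1 - mu) * r2)); auto.
    simpl. replace (1 - mu) with nu by lra.
    rewrite Er1, Er2. nra.
Qed.
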